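(* Let $M$ be a $4$-dimensional manifold with local coordinates $(x^1,\dots,x^4)$, $e_i=\partial/\partial x^i$, and Riemannian metric $g$ with components \[(g_{ij})=\begin{pmatrix} A&B&C&B\\ B&A&B&C\\ C&B&A&B\\ B&C&B&A\end{pmatrix},\] $A,B,C$ smooth functions with $A>C>B>0$. Let $P$ be the almost product structure with component matrix having rows $(0,0,1,0),(0,0,0,1),(1,0,0,0),(0,1,0,0)$. Then $(M,g,P)$ belongs to the class $\overline{\mathcal{W}}_6$ if and only if \[A_4-C_2=A_2-C_4,\quad B_4=B_2,\quad A_3-C_1=A_1-C_3,\quad B_3=B_1,\] where $A_i=\partial A/\partial x^i$, $B_i=\partial B/\partial x^i$, $C_i=\partial C/\partial x^i$.
   Context: Let $\nabla$ be the Levi-Civita connection of $g$, $F(x,y,z)=g((\nabla_xP)y,z)$, and $\theta(x)=g^{ij}F(e_i,e_j,x)$ with $(g^{ij})$ the inverse of $(g_{ij})$. The manifold $(M,g,P)$ belongs to the class $\overline{\mathcal{W}}_6$ (a basic class of Naveira's classification) if for all vector fields $x,y,z$: \[F(x,y,z)=\tfrac14\Big[\big(g(x,y)-g(x,Py)\big)\theta(z)+\big(g(x,z)-g(x,Pz)\big)\theta(y)\Big],\qquad \theta(Pz)=\theta(z).\] *)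

(* Defs.v *)
(* The manifold M is modelled by one
   coordinate chart: an open set U of R^4 (points are row vectors 'rV[R]_4,
   coordinate x^k is the entry of index k-1). *)
From HB Require Import structures.
From mathcomp Require Import all_boot all_order all_algebra.
From mathcomp Require Import all_classical all_reals topology normedtype derive.
Set Implicit Arguments. Unset Strict Implicit. Unset Printing Implicit Defensive.
Import Order.TTheory GRing.Theory Num.Theory.
Import numFieldNormedType.Exports.
Local Open Scope classical_set_scope.
Local Open Scope ring_scope.

Section Coords.
Variable R : realType.
Notation pt := 'rV[R]_4.

Definition ix (k : nat) : 'I_4 := inord k.-1.

Definition e (i : 'I_4) : pt := delta_mx 0 i.

Definition dpart (f : pt -> R) (i : 'I_4) (p : pt) : R := 'D_(e i) f p.

Fixpoint Cn_on (n : nat) (U : set pt) (f : pt -> R) : Prop :=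
  (forall p, U p -> {for p, continuous f}) /\
  match n with
  | 0 => True
  | n'.+1 => forall i : 'I_4,
      (forall p, U p -> derivable f p (e i)) /\ Cn_on n' U (dpart f i)
  end.

Definition smooth_on (U : set pt) (f : pt -> R) : Prop := forall n, Cn_on n U f.

(* A metric G and a (1,1)-tensor P are given by their component matrices
   G p i j = g_ij(p), P p l j = P^l_j(p)  (P e_j = sum_l P^l_j e_l). *)

Definition gform (G : pt -> 'M[R]_4) (p : pt) (u w : pt) : R :=
  \sum_(l < 4) \sum_(k < 4) u 0 l * G p l k * w 0 k.

Definition Papp (P : pt -> 'M[R]_4) (p : pt) (u : pt) : pt :=
  \row_l \sum_(j < 4) P p l j * u 0 j.

(* Christoffel symbols of the first kind: g(nabla_{e_i} e_j, e_k) *)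
Definition Gam1 (G : pt -> 'M[R]_4) (p : pt) (i j k : 'I_4) : R :=
  (dpart (fun q => G q j k) i p + dpart (fun q => G q i k) j p
   - dpart (fun q => G q i j) k p) / 2.

(* Christoffel symbols of the Levi-Civita connection:
   nabla_{e_i} e_j = sum_l Gam G p l i j e_l *)
Definition Gam (G : pt -> 'M[R]_4) (p : pt) (l i j : 'I_4) : R :=
  \sum_(k < 4) (invmx (G p)) l k * Gam1 G p i j k.

(* components (nabla_{e_i} P)^l_j of the covariant derivative of P *)
Definition nablaP (G P : pt -> 'M[R]_4) (p : pt) (i l j : 'I_4) : R :=
  dpart (fun q => P q l j) i p
  + \sum_(k < 4) Gam G p l i k * P p k j
  - \sum_(k < 4) P p l k * Gam G p k i j.

(* F(x,y,z) = g((nabla_x P) y, z) at p *)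
Definition Ften (G P : pt -> 'M[R]_4) (p : pt) (x y z : pt) : R :=
  \sum_(i < 4) \sum_(j < 4) \sum_(l < 4) \sum_(k < 4)
    x 0 i * y 0 j * nablaP G P p i l j * G p l k * z 0 k.

Definition theta (G P : pt -> 'M[R]_4) (p : pt) (x : pt) : R :=
  \sum_(i < 4) \sum_(j < 4) (invmx (G p)) i j * Ften G P p (e i) (e j) x.

(* the class W6-bar (conditions imposed at every point of U, for all
   tangent vectors; F and theta are tensorial) *)
Definition inW6 (U : set pt) (G P : pt -> 'M[R]_4) : Prop :=
  forall p, U p -> forall x y z : pt,
    Ften G P p x y z =
      (1 / 4) * ((gform G p x y - gform G p x (Papp P p y)) * theta G P p z
               + (gform G p x z - gform G p x (Papp P p z)) * theta G P p y)
    /\ theta G P p (Papp P p z) = theta G P p z.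

(* the metric of the statement: diagonal A, entries with i+j odd B,
   the remaining off-diagonal entries (1,3),(2,4) C *)
Definition gmat (A B C : pt -> R) (p : pt) : 'M[R]_4 :=
  \matrix_(i < 4, j < 4)
    (if i == j then A p else if odd (i + j) then B p else C p).

Definition Pmat : 'M[R]_4 :=
  \matrix_(i < 4, j < 4) (if (j : nat) == ((i + 2) %% 4)%N then 1 else 0).

End Coords.

(* Main.v *)
Require Import Defs.
From HB Require Import structures.
From mathcomp Require Import all_boot all_order all_algebra.
From mathcomp Require Import all_classical all_reals topology normedtype derive.
From mathcomp Require Import ring lra.
Import Order.TTheory GRing.Theory Num.Theory.
Import numFieldNormedType.Exports.
Local Open Scope classical_set_scope.
Local Open Scope ring_scope.
Set Implicit Arguments. Unset Strict Implicit. Unset Printing Implicit Defensive.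

Definition o0 : 'I_4 := @Ordinal 4 0 isT.
Definition o1 : 'I_4 := @Ordinal 4 1 isT.
Definition o2 : 'I_4 := @Ordinal 4 2 isT.
Definition o3 : 'I_4 := @Ordinal 4 3 isT.

Lemma ord4_cases (i : 'I_4) : i = o0 \/ i = o1 \/ i = o2 \/ i = o3.
Proof.
case: i => [[|[|[|[|i]]]] Hi] //.
- by left; apply: val_inj.
- by right; left; apply: val_inj.
- by right; right; left; apply: val_inj.
- by right; right; right; apply: val_inj.
Qed.

Definition sig (j : 'I_4) : 'I_4 := Ordinal (@ltn_pmod (j + 2) 4 isT).

Lemma sig0 : sig o0 = o2. Proof. exact: val_inj. Qed.
Lemma sig1 : sig o1 = o3. Proof. exact: val_inj. Qed.
Lemma sig2 : sig o2 = o0. Proof. exact: val_inj. Qed.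
Lemma sig3 : sig o3 = o1. Proof. exact: val_inj. Qed.
Lemma sigK : involutive sig.
Proof. by move=> i; have [->|[->|[->|->]]] := ord4_cases i; rewrite ?(sig0, sig1, sig2, sig3). Qed.
Lemma sig_inj : injective sig. Proof. exact: inv_inj sigK. Qed.
Lemma sig_neq (j : 'I_4) : (j == sig j) = false.
Proof. by have [->|[->|[->|->]]] := ord4_cases j; rewrite ?(sig0, sig1, sig2, sig3). Qed.

Lemma ix1 : ix 1 = o0. Proof. by apply: val_inj; rewrite /= inordK. Qed.
Lemma ix2 : ix 2 = o1. Proof. by apply: val_inj; rewrite /= inordK. Qed.
Lemma ix3 : ix 3 = o2. Proof. by apply: val_inj; rewrite /= inordK. Qed.
Lemma ix4 : ix 4 = o3. Proof. by apply: val_inj; rewrite /= inordK. Qed.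

Section S.
Variable R : realType.

Lemma PmatE (l j : 'I_4) : Pmat R l j = if l == sig j then 1 else 0.
Proof.
rewrite mxE.
by have [->|[->|[->|->]]] := ord4_cases l; have [->|[->|[->|->]]] := ord4_cases j.
Qed.

Lemma sum_delta (F : 'I_4 -> R) (s : 'I_4) :
  \sum_(k < 4) F k * (if k == s then 1 else 0) = F s.
Proof.
rewrite (bigD1 s) //= eqxx mulr1 big1 ?addr0 // => k /negbTE ->; by rewrite mulr0.
Qed.

Lemma sum_delta' (F : 'I_4 -> R) (s : 'I_4) :
  \sum_(k < 4) (if k == s then 1 else 0) * F k = F s.
Proof. rewrite -[RHS](sum_delta F s); apply: eq_bigr => k _; by rewrite mulrC. Qed.

End S.


Section S2.
Variable R : realType.
Variable G : 'rV[R]_4 -> 'M[R]_4.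
Variable p : 'rV[R]_4.
Hypothesis HU : invmx (G p) *m G p = 1%:M.
Hypothesis Hsym : forall i j, G p i j = G p j i.
Hypothesis Hs : forall l k, G p (sig l) (sig k) = G p l k.

Lemma Gi_sym i j : invmx (G p) i j = invmx (G p) j i.
Proof.
have E : (G p)^T = G p by apply/matrixP => a b; rewrite mxE Hsym.
by have := congr1 (fun M : 'M_4 => M j i) (trmx_inv (G p)); rewrite E mxE.
Qed.

Lemma Gi_G m k : \sum_(l < 4) invmx (G p) l m * G p l k = (m == k)%:R.
Proof.
have := congr1 (fun M : 'M_4 => M m k) HU; rewrite !mxE /= => <-.
by apply: eq_bigr => l _; rewrite Gi_sym.
Qed.

Lemma Gam_G i j k : \sum_(l < 4) Gam G p l i j * G p l k = Gam1 G p i j k.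
Proof.
rewrite /Gam.
under eq_bigr => l _ do rewrite mulr_suml.
rewrite exchange_big /=.
under eq_bigr => m _ do (under eq_bigr => l _ do rewrite mulrAC; rewrite -mulr_suml Gi_G).
rewrite (bigD1 k) //= eqxx mulr1n ?mul1r ?mulr1 big1 ?addr0 // => m /negbTE ->; by rewrite ?mulr0 ?mul0r.
Qed.

Lemma PmatE' (l j : 'I_4) : Pmat R l j = if j == sig l then 1 else 0.
Proof.
rewrite PmatE; congr (if _ then _ else _).
by apply/eqP/eqP => ->; rewrite sigK.
Qed.

Lemma dpart_cst (c : R) i : dpart (fun _ => c) i p = 0.
Proof. exact: derive_cst. Qed.

Lemma sumP1 (F : 'I_4 -> R) j : \sum_(k < 4) F k * Pmat R k j = F (sig j).
Proof. rewrite -(sum_delta F); apply: eq_bigr => k _; by rewrite PmatE. Qed.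

Lemma sumP2 (F : 'I_4 -> R) l : \sum_(k < 4) Pmat R l k * F k = F (sig l).
Proof. rewrite -(sum_delta' F); apply: eq_bigr => k _; by rewrite PmatE'. Qed.

Lemma Fb_eq i j k :
  \sum_(l < 4) nablaP G (fun _ => Pmat R) p i l j * G p l k =
  Gam1 G p i (sig j) k - Gam1 G p i j (sig k).
Proof.
rewrite /nablaP.
under eq_bigr => l _ do rewrite dpart_cst add0r sumP1 sumP2 mulrBl.
rewrite sumrB Gam_G; congr (_ - _).
rewrite (reindex_inj sig_inj) /=.
rewrite -Gam_G; apply: eq_bigr => l _.
by rewrite sigK -Hs sigK.
Qed.

End S2.

Section S3.
Variable R : realType.
Variable G : 'rV[R]_4 -> 'M[R]_4.
Variable p : 'rV[R]_4.
Hypothesis HU : invmx (G p) *m G p = 1%:M.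
Hypothesis Hsym : forall i j, G p i j = G p j i.

Lemma sum_natd (F : 'I_4 -> R) (s : 'I_4) :
  \sum_(k < 4) F k * (k == s)%:R = F s.
Proof.
rewrite (bigD1 s) //= eqxx mulr1 big1 ?addr0 // => k /negbTE ->; by rewrite mulr0.
Qed.

Lemma Git j k : \sum_(i < 4) invmx (G p) i j * (G p i k - G p i (sig k))
   = (j == k)%:R - (j == sig k)%:R.
Proof.
under eq_bigr => i _ do rewrite mulrBr.
by rewrite sumrB !Gi_G.
Qed.

Lemma theta_k (w : 'I_4 -> R) (Hw : forall j, w (sig j) = w j) k :
  \sum_(i < 4) \sum_(j < 4) invmx (G p) i j *
     (1/2 * ((G p i k - G p i (sig k)) * w j + (G p i j - G p i (sig j)) * w k))
  = 2 * w k.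
Proof.
have E : forall i j, invmx (G p) i j *
     (1/2 * ((G p i k - G p i (sig k)) * w j + (G p i j - G p i (sig j)) * w k))
   = 1/2 * (w j * (invmx (G p) i j * (G p i k - G p i (sig k))))
     + 1/2 * (w k * (invmx (G p) i j * (G p i j - G p i (sig j)))).
  by move=> i j; ring.
rewrite exchange_big /=.
under eq_bigr => j _ do (under eq_bigr => i _ do rewrite E;
   rewrite big_split /= -!mulr_sumr Git Git eqxx sig_neq).
rewrite big_split /= -mulr_sumr sumr_const card_ord.
under eq_bigr => j _ do rewrite mulrBr.
rewrite sumrB !sum_natd Hw.
rewrite subrr mulr0 add0r subr0 mulr1; by field.
Qed.

End S3.

Section S4.
Variable R : realType.

Definition Fb (G P : 'rV[R]_4 -> 'M[R]_4) p i j k :=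
  \sum_(l < 4) nablaP G P p i l j * G p l k.

Lemma Ften_exp G P p x y z :
  Ften G P p x y z =
  \sum_(i < 4) x 0 i * (\sum_(j < 4) y 0 j * (\sum_(k < 4) z 0 k * Fb G P p i j k)).
Proof.
rewrite /Ften; apply: eq_bigr => i _; rewrite mulr_sumr; apply: eq_bigr => j _.
rewrite exchange_big /= !mulr_sumr; apply: eq_bigr => k _.
rewrite /Fb !mulr_sumr; apply: eq_bigr => l _; ring.
Qed.

Lemma sum_e (a : 'I_4) (F : 'I_4 -> R) : \sum_(i < 4) (e R a) 0 i * F i = F a.
Proof.
rewrite -(sum_natd F a); apply: eq_bigr => i _; by rewrite /e mxE eqxx /= mulrC.
Qed.

Lemma Ften_e G P p a b z :
  Ften G P p (e R a) (e R b) z = \sum_(k < 4) z 0 k * Fb G P p a b k.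
Proof. by rewrite Ften_exp !sum_e. Qed.

Lemma Ften_eee G P p a b c : Ften G P p (e R a) (e R b) (e R c) = Fb G P p a b c.
Proof. by rewrite Ften_e sum_e. Qed.

Lemma theta_exp G P p z :
  theta G P p z = \sum_(k < 4) z 0 k *
     (\sum_(i < 4) \sum_(j < 4) invmx (G p) i j * Fb G P p i j k).
Proof.
rewrite /theta.
under eq_bigr => i _ do under eq_bigr => j _ do rewrite Ften_e mulr_sumr.
under eq_bigr => i _ do rewrite exchange_big /=.
rewrite exchange_big /=; apply: eq_bigr => k _.
rewrite mulr_sumr; apply: eq_bigr => i _; rewrite mulr_sumr; apply: eq_bigr => j _.
ring.
Qed.

Lemma gformP G p x y :
  gform G p x (Papp (fun _ => Pmat R) p y) =
  \sum_(l < 4) \sum_(k < 4) x 0 l * G p l k * y 0 (sig k).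
Proof.
apply: eq_bigr => l _; apply: eq_bigr => k _; by rewrite mxE sumP2.
Qed.

Lemma gform_ee G p a b : gform G p (e R a) (e R b) = G p a b.
Proof.
rewrite /gform.
under eq_bigr => l _ do (under eq_bigr => k _ do rewrite -mulrA; rewrite -mulr_sumr).
rewrite sum_e.
under eq_bigr => k _ do rewrite mulrC.
rewrite -(sum_natd (G p a) b); apply: eq_bigr => k _; by rewrite /e mxE eqxx /= mulrC.
Qed.

End S4.


Section S5.
Variable R : realType.

Definition gsel (j k : 'I_4) (a b c : R) :=
  if j == k then a else if odd (j + k) then b else c.

Lemma sum4 (F : 'I_4 -> R) : \sum_(i < 4) F i = F o0 + F o1 + F o2 + F o3.
Proof.
rewrite !big_ord_recr big_ord0 /= add0r.
by congr (_ + _ + _ + _); congr F; apply: val_inj.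
Qed.

Lemma gsel_sym j k a b c : gsel j k a b c = gsel k j a b c.
Proof. by rewrite /gsel eq_sym addnC. Qed.

Lemma gsel_sig j k a b c : gsel (sig j) (sig k) a b c = gsel j k a b c.
Proof.
by have [->|[->|[->|->]]] := ord4_cases j; have [->|[->|[->|->]]] := ord4_cases k;
  rewrite ?(sig0, sig1, sig2, sig3).
Qed.

Variables A B C : 'rV[R]_4 -> R.

Lemma gmatE p j k : gmat A B C p j k = gsel j k (A p) (B p) (C p).
Proof. by rewrite mxE. Qed.

Lemma dG p i j k : dpart (fun q => gmat A B C q j k) i p =
  gsel j k (dpart A i p) (dpart B i p) (dpart C i p).
Proof.
have -> : (fun q => gmat A B C q j k) =
   (if j == k then A else if odd (j + k) then B else C).
  by apply: funext => q; rewrite mxE; case: ifP => _ //; case: ifP.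
by rewrite /gsel; case: ifP => _ //; case: ifP.
Qed.

Lemma gsel_unit (a' b' c' : R) : 0 < b' -> b' < c' -> c' < a' ->
  (\matrix_(i, j) gsel i j a' b' c') \in unitmx.
Proof.
move=> h1 h2 h3.
have hD : (a' + c') ^+ 2 - 4 * b' ^+ 2 != 0.
  have -> : (a' + c') ^+ 2 - 4 * b' ^+ 2 = (a' + c' - 2 * b') * (a' + c' + 2 * b') by ring.
  rewrite lt0r_neq0 // mulr_gt0 //; lra.
have hu : a' - c' != 0 by rewrite lt0r_neq0 // subr_gt0.
move: hD; set D := (a' + c') ^+ 2 - 4 * b' ^+ 2 => hD.
pose a := (a' + c') / (2 * D) + 1 / (2 * (a' - c')).
pose c := (a' + c') / (2 * D) - 1 / (2 * (a' - c')).
pose b := - b' / D.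
pose M : 'M[R]_4 := \matrix_(i, j) gsel i j a b c.
suff H : (\matrix_(i, j) gsel i j a' b' c') *m M = 1%:M by case: (mulmx1_unit H).
apply/matrixP => i k; rewrite !mxE sum4 !mxE.
have [->|[->|[->|->]]] := ord4_cases i; have [->|[->|[->|->]]] := ord4_cases k;
  rewrite /gsel /= /a /b /c; rewrite /D; field; by rewrite ?hD ?hu.
Qed.

Lemma gmat_unit p : 0 < B p -> B p < C p -> C p < A p ->
  gmat A B C p \in unitmx.
Proof.
move=> h1 h2 h3.
have -> : gmat A B C p = \matrix_(i, j) gsel i j (A p) (B p) (C p).
  by apply/matrixP => i j; rewrite !mxE.
exact: gsel_unit.
Qed.

End S5.


Section S6.
Variable R : realType.
Variables A B C : 'rV[R]_4 -> R.
Variable p : 'rV[R]_4.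
Hypothesis h1 : 0 < B p.
Hypothesis h2 : B p < C p.
Hypothesis h3 : C p < A p.

Local Notation G := (gmat A B C).
Local Notation P := (fun _ : 'rV[R]_4 => Pmat R).

Lemma HU : invmx (G p) *m G p = 1%:M.
Proof. by apply: mulVmx; apply: gmat_unit. Qed.
Lemma Hsym i j : G p i j = G p j i.
Proof. by rewrite !gmatE gsel_sym. Qed.
Lemma Hs l k : G p (sig l) (sig k) = G p l k.
Proof. by rewrite !gmatE gsel_sig. Qed.

Lemma Fb_gm i j k : Fb G P p i j k = Gam1 G p i (sig j) k - Gam1 G p i j (sig k).
Proof. apply: Fb_eq; [exact: HU | exact: Hsym | exact: Hs]. Qed.

Definition Ga (dA dB dC : 'I_4 -> R) (i j k : 'I_4) : R :=
  (gsel j k (dA i) (dB i) (dC i) + gsel i k (dA j) (dB j) (dC j)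
   - gsel i j (dA k) (dB k) (dC k)) / 2.
Definition Fa dA dB dC i j k := Ga dA dB dC i (sig j) k - Ga dA dB dC i j (sig k).

Lemma Fb_alg i j k : Fb G P p i j k =
  Fa (fun i => dpart A i p) (fun i => dpart B i p) (fun i => dpart C i p) i j k.
Proof. by rewrite Fb_gm /Gam1 !dG. Qed.

Lemma Papp_e b : Papp P p (e R b) = e R (sig b).
Proof.
apply/matrixP => i l; rewrite !mxE sumP2 /e mxE (ord1 i).
have -> : (sig l == b) = (l == sig b) by apply/eqP/eqP => [<-|->]; rewrite sigK.
by [].
Qed.

Lemma lin_comb (x y u v : R) : x = u -> y = v -> u + v = 0 -> x + y = 0.
Proof. by move=> -> ->. Qed.
Lemma lin_one (x u : R) : x = u -> u = 0 -> x = 0.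
Proof. by move=> ->. Qed.

Definition condf (dA dB dC : 'I_4 -> R) :=
  dA o3 - dC o1 = dA o1 - dC o3 /\ dB o3 = dB o1 /\
  dA o2 - dC o0 = dA o0 - dC o2 /\ dB o2 = dB o0.

Definition cond :=
  dpart A o3 p - dpart C o1 p = dpart A o1 p - dpart C o3 p /\
  dpart B o3 p = dpart B o1 p /\
  dpart A o2 p - dpart C o0 p = dpart A o0 p - dpart C o2 p /\
  dpart B o2 p = dpart B o0 p.

Lemma forward :
  (forall x y z : 'rV[R]_4,
    Ften G P p x y z =
      (1 / 4) * ((gform G p x y - gform G p x (Papp P p y)) * theta G P p z
               + (gform G p x z - gform G p x (Papp P p z)) * theta G P p y)) ->
  cond.
Proof.
move=> W.
have F3 a b c : Fb G P p a b c =
   (1 / 4) * ((G p a b - G p a (sig b)) * theta G P p (e R c)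
             + (G p a c - G p a (sig c)) * theta G P p (e R b)).
  by rewrite -Ften_eee W !Papp_e !gform_ee.
have E1 := F3 o1 o1 o1; have E2 := F3 o3 o1 o1; have E3 := F3 o0 o1 o1.
have E4 := F3 o0 o0 o0; have E5 := F3 o2 o0 o0; have E6 := F3 o1 o0 o0.
rewrite !Fb_alg !gmatE in E1 E2 E3 E4 E5 E6.
change (condf (fun i => dpart A i p) (fun i => dpart B i p) (fun i => dpart C i p)).
move: E1 E2 E3 E4 E5 E6.
move: (fun i => dpart A i p) (fun i => dpart B i p) (fun i => dpart C i p) => dA dB dC.
move: (theta G P p (e R o0)) (theta G P p (e R o1)) => t0 t1.
rewrite /Fa /Ga ?(sig0, sig1, sig2, sig3) /gsel /= => E1 E2 E3 E4 E5 E6.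
have S1 := lin_comb E1 E2; lapply S1; [clear S1 => S1 | by ring].
have S2 := lin_comb E4 E5; lapply S2; [clear S2 => S2 | by ring].
have S3 := lin_one E3; lapply S3; [clear S3 => S3 | by ring].
have S4 := lin_one E6; lapply S4; [clear S4 => S4 | by ring].
clear E1 E2 E3 E4 E5 E6.
clear h1 h2 h3.
rewrite /condf; split; [|split; [|split]]; apply/eqP; rewrite -subr_eq0; apply/eqP.
- rewrite -[RHS]S1; by field.
- rewrite -[RHS]S3; by field.
- rewrite -[RHS]S2; by field.
- rewrite -[RHS]S4; by field.
Qed.

Definition wf (dA dC : 'I_4 -> R) (a c : R) (j : 'I_4) :=
  (dA j - dC j + dA (sig j) - dC (sig j)) / (2 * (a - c)).

Lemma wf_sig dA dC a c j : wf dA dC a c (sig j) = wf dA dC a c j.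
Proof. rewrite /wf sigK; congr (_ / _); ring. Qed.

Lemma FaW (dA dB dC : 'I_4 -> R) (a b c : R) : a - c != 0 -> condf dA dB dC ->
  forall i j k, Fa dA dB dC i j k =
   1/2 * ((gsel i k a b c - gsel i (sig k) a b c) * wf dA dC a c j
        + (gsel i j a b c - gsel i (sig j) a b c) * wf dA dC a c k).
Proof.
move=> hu [c1 [c2 [c3 c4]]].
have eA3 : dA o3 = dA o1 - dC o3 + dC o1.
  by rewrite -[dA o3](subrK (dC o1)) c1.
have eA2 : dA o2 = dA o0 - dC o2 + dC o0.
  by rewrite -[dA o2](subrK (dC o0)) c3.
move=> i j k.
have [->|[->|[->|->]]] := ord4_cases i; have [->|[->|[->|->]]] := ord4_cases j;
  have [->|[->|[->|->]]] := ord4_cases k;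
  rewrite /Fa /Ga /wf ?(sig0, sig1, sig2, sig3) /gsel /= ?eA3 ?eA2 ?c2 ?c4;
  field; by rewrite ?hu.
Qed.

Lemma final_id (x y z : 'I_4 -> R) (Gm : 'I_4 -> 'I_4 -> R) (w : 'I_4 -> R) :
  \sum_(i < 4) x i * (\sum_(j < 4) y j * (\sum_(k < 4) z k *
     (1/2 * ((Gm i k - Gm i (sig k)) * w j + (Gm i j - Gm i (sig j)) * w k))))
  = 1/4 * ((\sum_(l < 4) \sum_(k < 4) x l * Gm l k * y k
            - \sum_(l < 4) \sum_(k < 4) x l * Gm l k * y (sig k)) * (\sum_(k < 4) z k * (2 * w k))
         + (\sum_(l < 4) \sum_(k < 4) x l * Gm l k * z k
            - \sum_(l < 4) \sum_(k < 4) x l * Gm l k * z (sig k)) * (\sum_(k < 4) y k * (2 * w k))).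
Proof.
rewrite !sum4 ?(sig0, sig1, sig2, sig3); by field.
Qed.

Definition w := wf (fun i => dpart A i p) (fun i => dpart C i p) (A p) (C p).

Lemma hu : A p - C p != 0.
Proof. by rewrite lt0r_neq0 // subr_gt0. Qed.

Lemma FbW (hc : cond) i j k : Fb G P p i j k =
  1/2 * ((G p i k - G p i (sig k)) * w j + (G p i j - G p i (sig j)) * w k).
Proof. by rewrite Fb_alg (FaW (B p) hu hc) !gmatE. Qed.

Lemma theta_w (hc : cond) z : theta G P p z = \sum_(k < 4) z 0 k * (2 * w k).
Proof.
rewrite theta_exp; apply: eq_bigr => k _; congr (_ * _).
under eq_bigr => i _ do under eq_bigr => j _ do rewrite FbW //.
apply: theta_k; [exact: HU | exact: Hsym | exact: wf_sig].
Qed.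

Lemma backward (hc : cond) x y z :
    Ften G P p x y z =
      (1 / 4) * ((gform G p x y - gform G p x (Papp P p y)) * theta G P p z
               + (gform G p x z - gform G p x (Papp P p z)) * theta G P p y)
    /\ theta G P p (Papp P p z) = theta G P p z.
Proof.
split.
- rewrite Ften_exp !theta_w // !gformP /gform.
  under eq_bigr => i _ do under eq_bigr => j _ do under eq_bigr => k _ do rewrite FbW //.
  exact: (final_id (fun i => x 0 i) (fun i => y 0 i) (fun i => z 0 i) (G p) w).
- rewrite !theta_w //.
  under eq_bigr => k _ do rewrite mxE sumP2.
  rewrite (reindex_inj sig_inj) /=; apply: eq_bigr => k _.
  by rewrite sigK /w wf_sig.
Qed.

End S6.


Theorem corollary3p7 (R : realType) (U : set 'rV[R]_4) (A B C : 'rV[R]_4 -> R) :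
  open U ->
  smooth_on U A -> smooth_on U B -> smooth_on U C ->
  (forall p, U p -> 0 < B p /\ B p < C p /\ C p < A p) ->
  inW6 U (gmat A B C) (fun _ => Pmat R) <->
  (forall p, U p ->
     dpart A (ix 4) p - dpart C (ix 2) p = dpart A (ix 2) p - dpart C (ix 4) p /\
     dpart B (ix 4) p = dpart B (ix 2) p /\
     dpart A (ix 3) p - dpart C (ix 1) p = dpart A (ix 1) p - dpart C (ix 3) p /\
     dpart B (ix 3) p = dpart B (ix 1) p).
Proof.
move=> _ _ _ _ Hpos; split.
- move=> W p Up; have [h1 [h2 h3]] := Hpos p Up.
  rewrite ix1 ix2 ix3 ix4.
  exact: (forward h1 h2 h3 (fun x y z => (W p Up x y z).1)).
- move=> H p Up x y z; have [h1 [h2 h3]] := Hpos p Up.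
  apply: (backward h1 h2 h3).
  by have := H p Up; rewrite ix1 ix2 ix3 ix4.
Qed.
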